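(* For all integers $3\le r\le n$, \[ \log p(n,r) \le \frac{1}{n-r+1}\binom{n}{r}\log\bigl(\mathrm{e}(n-r+1)\bigr). \]
   Context: $p(n,r)$ denotes the number of paving matroids of rank $r$ on the ground set $[n]=\{1,\dots,n\}$; a matroid of rank $r$ is paving if each of its circuits has cardinality at least $r$. $\log$ is the logarithm to base $2$ and $\mathrm{e}$ is Euler's number. *)

(* Defs.v *)
From mathcomp Require Import all_boot.
From Stdlib Require Import Reals.
Set Implicit Arguments. Unset Strict Implicit. Unset Printing Implicit Defensive.

Definition is_matroid (n : nat) (I : {set {set 'I_n}}) : bool :=
  [&& set0 \in I,
      [forall B in I, forall A : {set 'I_n}, (A \subset B) ==> (A \in I)] &
      [forall A in I, forall B in I,
         (#|A| < #|B|) ==> [exists x in B :\: A, (x |: A) \in I]]].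

Definition has_rank (n r : nat) (I : {set {set 'I_n}}) : bool :=
  [exists B in I, #|B| == r] && [forall A in I, #|A| <= r].

Definition is_circuit (n : nat) (I : {set {set 'I_n}}) (C : {set 'I_n}) : bool :=
  (C \notin I) && [forall x in C, (C :\ x) \in I].

Definition paving (n r : nat) (I : {set {set 'I_n}}) : bool :=
  [forall C : {set 'I_n}, is_circuit I C ==> (r <= #|C|)].

Definition p (n r : nat) : nat :=
  #|[set I : {set {set 'I_n}} | [&& is_matroid I, has_rank r I & paving r I]]|.

Definition log2 (x : R) : R := (ln x / ln 2)%R.

(* Main.v *)
Require Import Defs.
From mathcomp Require Import all_boot.
From Stdlib Require Import Reals.
From Stdlib Require Import Lra.
From mathcomp Require Import ssrnat zify.
Set Implicit Arguments. Unset Strict Implicit. Unset Printing Implicit Defensive.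


Definition clo (n : nat) (I : {set {set 'I_n}}) (Y : {set 'I_n}) : {set 'I_n} :=
  Y :|: [set e | e |: Y \notin I].

Lemma mat_aug n (I : {set {set 'I_n}}) (A B : {set 'I_n}) : is_matroid I -> A \in I -> B \in I ->
  #|A| < #|B| -> exists2 x, x \in B :\: A & x |: A \in I.
Proof.
case/and3P=> _ _ /forallP H AI BI lt.
move: (H A); rewrite AI /= => /forallP /(_ B); rewrite BI lt /=.
by case/existsP=> x /andP[]; exists x.
Qed.

Lemma small_indep n r (I : {set {set 'I_n}}) (A : {set 'I_n}) : is_matroid I -> paving r I ->
  #|A| < r -> A \in I.
Proof.
move=> mI pv.
suff H : forall k (A : {set 'I_n}), #|A| = k -> k < r -> A \in I by apply: H.
elim=> [|k IH] {}A hA hk.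
  by move/eqP: hA; rewrite cards_eq0 => /eqP ->; case/and3P: mI.
apply/negPn/negP => nA.
have circ : is_circuit I A.
  rewrite /is_circuit nA /=; apply/forallP => x; apply/implyP => xA.
  apply: IH; last by lia.
  by move: (cardsD1 x A); rewrite xA hA add1n => -[].
move/forallP: pv => /(_ A) /implyP /(_ circ); lia.
Qed.

Lemma big_dep n r (I : {set {set 'I_n}}) (A : {set 'I_n}) : has_rank r I -> r < #|A| -> A \notin I.
Proof.
case/andP=> _ /forallP H lt; apply/negP => AI.
by move: (H A); rewrite AI /= leqNgt lt.
Qed.

Lemma clo_dep n (I : {set {set 'I_n}}) (Y A : {set 'I_n}) : is_matroid I -> Y \in I ->
  A \subset clo I Y -> #|Y| < #|A| -> A \notin I.
Proof.
move=> mI YI sA lt; apply/negP => AI.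
have [x] := mat_aug mI YI AI lt.
rewrite inE => /andP[xY xA] xYI.
move/subsetP: sA => /(_ x xA); rewrite /clo !inE (negbTE xY) xYI //.
Qed.


Lemma clo_sub n r (I : {set {set 'I_n}}) (Y Y' : {set 'I_n}) :
  is_matroid I -> paving r I -> 0 < r -> #|Y| = r.-1 -> #|Y'| = r.-1 ->
  Y' \subset clo I Y -> clo I Y \subset clo I Y'.
Proof.
move=> mI pI r0 hY hY' sY; apply/subsetP => e eC.
case eY': (e \in Y'); first by rewrite /clo inE eY'.
rewrite /clo !inE eY' /=.
apply: (clo_dep (Y := Y)) => //.
- apply: small_indep pI _; lia.
- by rewrite subUset sub1set eC.
- rewrite cardsU1 eY'; lia.
Qed.

Lemma sub_clo n (I : {set {set 'I_n}}) (Y : {set 'I_n}) : Y \subset clo I Y.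
Proof. exact: subsetUl. Qed.

Lemma clo_eq n r (I : {set {set 'I_n}}) (Y Y' : {set 'I_n}) :
  is_matroid I -> paving r I -> 0 < r -> #|Y| = r.-1 -> #|Y'| = r.-1 ->
  Y' \subset clo I Y -> clo I Y' = clo I Y.
Proof.
move=> mI pI r0 hY hY' sY.
have h1 := clo_sub mI pI r0 hY hY' sY.
apply/eqP; rewrite eqEsubset h1 andbT.
apply: (clo_sub (r:=r)) => //; exact: (subset_trans (sub_clo I Y) h1).
Qed.

Definition rep n r (I : {set {set 'I_n}}) (Y : {set 'I_n}) : {set 'I_n} :=
  odflt Y [pick Z : {set 'I_n} | (#|Z| == r.-1) && (clo I Z == clo I Y)].

Lemma rep_spec n r (I : {set {set 'I_n}}) (Y : {set 'I_n}) : #|Y| = r.-1 ->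
  #|rep r I Y| = r.-1 /\ clo I (rep r I Y) = clo I Y.
Proof.
move=> hY; rewrite /rep; case: pickP => [Z /andP[/eqP -> /eqP ->] //|].
by move/(_ Y); rewrite hY eqxx.
Qed.

Lemma rep_clo n r (I : {set {set 'I_n}}) (Y1 Y2 : {set 'I_n}) :
  #|Y1| = r.-1 -> clo I Y1 = clo I Y2 -> rep r I Y1 = rep r I Y2.
Proof.
move=> h1 h; rewrite /rep h; case: pickP => // H.
by move: (H Y1); rewrite h1 h !eqxx.
Qed.

Definition rsets n k : {set {set 'I_n}} := [set A : {set 'I_n} | #|A| == k].
Definition Reps n r (I : {set {set 'I_n}}) := [set rep r I Y | Y in rsets n r.-1].
Definition Sfam n r (I : {set {set 'I_n}}) : {set {set 'I_n}} :=
  \bigcup_(Z in Reps r I) [set e |: Z | e in clo I Z :\: Z].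
Definition dec n r (S : {set {set 'I_n}}) : {set {set 'I_n}} :=
  [set A in rsets n r | [exists Y in rsets n r.-1, A \subset Y :|: [set e | e |: Y \in S]]].
Definition Dset n r (I : {set {set 'I_n}}) : {set {set 'I_n}} :=
  [set A in rsets n r | A \notin I].

Lemma Reps_card n r (I : {set {set 'I_n}}) Z : Z \in Reps r I -> #|Z| = r.-1.
Proof.
by case/imsetP => Y; rewrite inE => /eqP /(@rep_spec _ r I _) [h _] ->.
Qed.

Lemma Sfam_D n r (I : {set {set 'I_n}}) : 0 < r -> Sfam r I \subset Dset r I.
Proof.
move=> r0; apply/subsetP => X /bigcupP [Z ZR /imsetP [e]].
rewrite !inE => /andP [eZ eC] ->.
have hZ := Reps_card ZR.
rewrite cardsU1 eZ hZ /=; apply/andP; split; first by apply/eqP; lia.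
by move: eC; rewrite /clo ?inE (negbTE eZ).
Qed.

Lemma dec_Sfam n r (I : {set {set 'I_n}}) :
  is_matroid I -> paving r I -> 0 < r -> dec r (Sfam r I) = Dset r I.
Proof.
move=> mI pI r0; apply/setP => A; rewrite !inE.
case hA: (#|A| == r) => //=; apply/idP/idP.
- case/existsP => Y /andP []; rewrite inE => /eqP hY sA.
  apply: (clo_dep (Y := Y)) => //.
  + apply: small_indep pI _; lia.
  + apply: (subset_trans sA); rewrite /clo setUS //; apply/subsetP => e.
    rewrite !inE => /(subsetP (Sfam_D I r0)); rewrite inE => /andP [] //.
  + by rewrite hY (eqP hA); lia.
- move=> nA.
  have : 0 < #|A| by rewrite (eqP hA).
  rewrite card_gt0 => /set0Pn [a aA].
  set Y := A :\ a.
  have hY : #|Y| = r.-1.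
    by move: (cardsD1 a A); rewrite aA (eqP hA) add1n -/Y; lia.
  have [hZ cZ] := @rep_spec _ r I _ hY.
  set Z := rep r I Y in hZ cZ *.
  have ZR : Z \in Reps r I by apply: imset_f; rewrite inE hY.
  apply/existsP; exists Z; rewrite inE hZ eqxx /=.
  apply/subsetP => b bA; rewrite inE.
  case bZ: (b \in Z) => //=; rewrite inE.
  apply/bigcupP; exists Z => //; apply/imsetP; exists b => //.
  rewrite inE bZ /= cZ /clo !inE.
  case: (eqVneq b a) => [-> | ba]; last by rewrite bA.
  by rewrite /Y setD1K.
Qed.

Lemma card_bigcup_le (T I : finType) (P : pred I) (F : I -> {set T}) :
  #|\bigcup_(i | P i) F i| <= \sum_(i | P i) #|F i|.
Proof.
apply: (big_ind2 (fun (U : {set T}) k => #|U| <= k)) => //.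
- by rewrite cards0.
- move=> U1 k1 U2 k2 h1 h2; rewrite cardsU; lia.
Qed.

Lemma bin_ineq j f : j.+3 * f <= 'C(j.+2 + f, j.+2).
Proof.
case: f => [|g]; first by rewrite muln0.
elim: g => [|g IH]; first by rewrite muln1 addn1 binSn.
have e : j.+2 + g.+2 = (j.+2 + g.+1).+1 by rewrite addnS.
rewrite e binS.
have : j.+3 <= 'C(j.+2 + g.+1, j.+1).
  apply: leq_trans (leq_bin2l _ (_ : j.+3 <= _)); last by lia.
  rewrite binS binSn.
  have := bin_gt0 j.+2 j; rewrite leqW ?leqnSn //=; lia.
move: IH; lia.
Qed.

Lemma count_S n r (I : {set {set 'I_n}}) :
  is_matroid I -> paving r I -> 2 < r -> r * #|Sfam r I| <= 'C(n, r.-1).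
Proof.
move=> mI pI r2.
have r0 : 0 < r by lia.
have h1 : #|Sfam r I| <= \sum_(Z in Reps r I) #|clo I Z :\: Z|.
  apply: leq_trans (card_bigcup_le _ _) _.
  by apply: leq_sum => Z _; apply: leq_imset_card.
have h2 : forall Z, Z \in Reps r I ->
    r * #|clo I Z :\: Z| <= #|[set Y in rsets n r.-1 | rep r I Y == Z]|.
  move=> Z ZR; have hZ := Reps_card ZR.
  case/imsetP: (ZR) => Y0; rewrite inE => /eqP hY0 eZ.
  have [_ cZ] := @rep_spec _ r I _ hY0; rewrite -eZ in cZ.
  have rZ : rep r I Z = Z by rewrite eZ; apply: rep_clo => //; rewrite -eZ.
  have -> : [set Y in rsets n r.-1 | rep r I Y == Z] =
            [set Y : {set 'I_n} | Y \subset clo I Z & #|Y| == r.-1].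
    apply/setP => Y; rewrite !inE.
    case hY: (#|Y| == r.-1); rewrite ?andbF ?andbT //=.
    move/eqP: hY => hY; apply/idP/idP.
    - move/eqP => <-; have [_ ->] := @rep_spec _ r I _ hY; exact: sub_clo.
    - move=> sY; have := clo_eq mI pI r0 hZ hY sY => cY.
      by rewrite -rZ (rep_clo (r:=r) hY cY).
  rewrite cards_draws.
  have sZ := sub_clo I Z.
  have eC : #|clo I Z| = r.-1 + #|clo I Z :\: Z|.
    by rewrite cardsD (setIidPr sZ) hZ -hZ subnKC // subset_leq_card.
  rewrite eC; case: r r2 {r0 mI pI hZ hY0 h1 eC ZR eZ cZ rZ} => [|[|[|j]]] //= _.
  exact: bin_ineq.
apply: leq_trans (_ : \sum_(Z in Reps r I) #|[set Y in rsets n r.-1 | rep r I Y == Z]| <= _).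
  apply: leq_trans (_ : r * \sum_(Z in Reps r I) #|clo I Z :\: Z| <= _).
    by rewrite leq_mul2l h1 orbT.
  by rewrite big_distrr /=; apply: leq_sum => Z ZR; apply: h2.
have -> : 'C(n, r.-1) = \sum_(Y in rsets n r.-1) 1.
  by rewrite sum1_card /rsets card_draws card_ord.
rewrite [X in _ <= X](partition_big (rep r I) (mem (Reps r I))) /=; last first.
  by move=> Y YR; apply: imset_f.
apply: eq_leq; apply: eq_bigr => Z _.
by rewrite -sum1_card; apply: eq_bigl => Y; rewrite !inE.
Qed.

Lemma count_small (T : finType) (X : {set T}) k0 m : 0 < m ->
  #|[set S : {set T} | S \subset X & #|S| <= k0]| * m ^ (#|X| - k0) <= (m.+1) ^ #|X|.
Proof.
move=> m0; set N := #|X|.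
rewrite -sum_nat_const.
apply: leq_trans (_ : \sum_(S : {set T} | S \subset X) m ^ (N - #|S|) <= _).
  rewrite big_mkcond [X in _ <= X]big_mkcond /=; apply: leq_sum => S _.
  rewrite inE; case: (S \subset X) => //=; case h: (#|S| <= k0) => //.
  by apply: leq_pexp2l => //; lia.
rewrite (partition_big (fun S : {set T} => (inord #|S| : 'I_N.+1)) xpredT) //=.
rewrite -[m.+1]addn1 (expnDn m 1) /=.
apply: eq_leq; apply: eq_bigr => k _.
rewrite exp1n muln1 -(cards_draws X k) -sum_nat_const.
apply: congr_big => // S; last first.
  case/andP => sX /eqP <-; rewrite inordK // ltnS subset_leq_card //.
rewrite inE; case sX: (S \subset X) => //=.
have : #|S| < N.+1 by rewrite ltnS subset_leq_card.
move=> hS; apply/eqP/eqP => [<-|hk]; first by rewrite inordK.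
by apply: val_inj; rewrite /= inordK.
Qed.

Lemma p_nat n r : 2 < r -> 0 < n - r + 1 ->
  p n r * (n - r + 1) ^ ('C(n, r) - 'C(n, r.-1) %/ r) <= (n - r + 1).+1 ^ 'C(n, r).
Proof.
move=> r2 m0.
set P := [set I : {set {set 'I_n}} | [&& is_matroid I, has_rank r I & paving r I]].
set Small := [set S : {set {set 'I_n}} | S \subset rsets n r & #|S| <= 'C(n, r.-1) %/ r].
have hN : #|rsets n r| = 'C(n, r) by rewrite /rsets card_draws card_ord.
have hp : p n r <= #|Small|.
  rewrite /p -/P -(@card_in_imset _ _ (@Dset n r) P).
    apply: leq_trans (leq_imset_card (@dec n r) Small).
    apply: subset_leq_card; apply/subsetP => D /imsetP [I].
    rewrite inE => /and3P [mI rI pI] ->.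
    rewrite -dec_Sfam //; last by lia.
    apply: imset_f; rewrite inE; apply/andP; split.
      apply: subset_trans (Sfam_D I (_ : 0 < r)) _; first by lia.
      by apply/subsetP => A; rewrite inE => /andP [].
    rewrite leq_divRL; last by lia.
    by rewrite mulnC; apply: count_S => //; lia.
  move=> I1 I2; rewrite !inE => /and3P [m1 r1 p1] /and3P [m2 r2' p2] eD.
  apply/setP => A.
  case: (ltngtP #|A| r) => hA.
  - by rewrite (small_indep m1 p1 hA) (small_indep m2 p2 hA).
  - by rewrite (negbTE (big_dep r1 hA)) (negbTE (big_dep r2' hA)).
  - move/setP: eD => /(_ A); rewrite !inE hA eqxx /=.
    by move=> h; apply: negb_inj.
apply: leq_trans (leq_mul hp (leqnn _)) _.
by rewrite -hN; apply: count_small.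
Qed.


Lemma ln0 : ln 0 = 0%R.
Proof. rewrite /ln; case: Rlt_dec => // h; case: (Rlt_irrefl _ h). Qed.

Lemma ln_le' (x y : R) : (0 < x)%R -> (x <= y)%R -> (ln x <= ln y)%R.
Proof.
intros hx hxy; destruct (Rle_lt_or_eq_dec _ _ hxy) as [h|h].
- left; apply ln_increasing; auto.
- subst; lra.
Qed.

Lemma expn_pow a b : expn a b = Nat.pow a b.
Proof. elim: b => [|b IH] //; rewrite expnS IH /=; by []. Qed.

Lemma real_part (p m N k0 : nat) : (1 <= m)%N -> (k0 <= N)%N -> (k0 * m <= N)%N ->
  (p * m ^ (N - k0) <= m.+1 ^ N)%N ->
  (log2 (INR p) <= / INR m * INR N * log2 (exp 1 * INR m))%R.
Proof.
move=> /leP hm /leP hk /leP hkm /leP hp.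
rewrite !expn_pow in hp.
have Hm : (1 <= INR m)%R by apply: (le_INR 1).
have Hkm : (INR k0 * INR m <= INR N)%R by rewrite -mult_INR; apply: le_INR.
have Hp : (INR p * INR m ^ (N - k0) <= (INR m + 1) ^ N)%R.
  by rewrite -pow_INR -mult_INR -S_INR -pow_INR; apply: le_INR.
have l2 : (0 < ln 2)%R by rewrite -ln_1; apply: ln_increasing; lra.
have lm : (0 <= ln (INR m))%R by rewrite -ln_1; apply: ln_le'; lra.
have lem : (ln (exp 1 * INR m) = 1 + ln (INR m))%R.
  by rewrite ln_mult ?ln_exp //; [apply: exp_pos | lra].
suff H : (ln (INR p) <= / INR m * INR N * (1 + ln (INR m)))%R.
  rewrite /log2 lem.
  have -> : (/ INR m * INR N * ((1 + ln (INR m)) / ln 2) =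
      (/ INR m * INR N * (1 + ln (INR m))) / ln 2)%R by field; lra.
  apply: Rmult_le_compat_r => //; left; apply: Rinv_0_lt_compat; lra.
case: p hp Hp => [|p] _ Hp.
  rewrite /= ln0; apply: Rmult_le_pos; [|lra].
  apply: Rmult_le_pos; [left; apply: Rinv_0_lt_compat; lra | apply: pos_INR].
have Pp : (1 <= INR p.+1)%R by apply: (le_INR 1); apply/leP.
have l1 : (ln (INR p.+1) + INR (N - k0) * ln (INR m) <= INR N * ln (INR m + 1))%R.
  rewrite -!ln_pow; try lra.
  rewrite -ln_mult; try lra; last by apply: pow_lt; lra.
  apply: ln_le' => //; apply: Rmult_lt_0_compat; [lra | apply: pow_lt; lra].
have l3 : (ln (INR m + 1) <= ln (INR m) + / INR m)%R.
  have -> : (INR m + 1 = INR m * (1 + / INR m))%R by field; lra.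
  rewrite ln_mult; try lra; last first.
    have : (0 < / INR m)%R by apply: Rinv_0_lt_compat; lra.
    lra.
  suff : (ln (1 + / INR m) <= / INR m)%R by lra.
  rewrite -{2}(ln_exp (/ INR m)); apply: ln_le'; last by apply: exp_ineq1_le.
  have : (0 < / INR m)%R by apply: Rinv_0_lt_compat; lra.
  lra.
rewrite minus_INR in l1; last exact: hk.
have Hk2 : (INR k0 <= / INR m * INR N)%R.
  apply: (Rmult_le_reg_r (INR m)); first lra.
  have -> : (/ INR m * INR N * INR m = INR N)%R by field; lra.
  lra.
have hN : (0 <= INR N)%R by apply: pos_INR.
have : (INR N * ln (INR m + 1) <= INR N * (ln (INR m) + / INR m))%R.
  by apply: Rmult_le_compat_l.
have : (INR k0 * ln (INR m) <= / INR m * INR N * ln (INR m))%R.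
  by apply: Rmult_le_compat_r.
move=> h1 h2.
have -> : (/ INR m * INR N * (1 + ln (INR m)) =
           / INR m * INR N * ln (INR m) + INR N * / INR m)%R by field; lra.
lra.
Qed.

Theorem theorem1p4 (n r : nat) :
  (3 <= r)%N -> (r <= n)%N ->
  (log2 (INR (p n r)) <=
     / INR (n - r + 1) * INR 'C(n, r) * log2 (exp 1 * INR (n - r + 1)))%R.
Proof.
move=> r3 rn.
have hb := mul_bin_left n r.-1.
rewrite prednK in hb; last by lia.
have hd := leq_trunc_div 'C(n, r.-1) r.
have hp := @p_nat n r r3 (_ : 0 < n - r + 1).
move: hb hd hp.
have -> : n - r.-1 = n - r + 1 by lia.
set L := 'C(n, r.-1); set N := 'C(n, r); set k := L %/ r; set m := n - r + 1.
move=> hb hd hp.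
have m0 : 0 < m by rewrite /m; lia.
have r0 : 0 < r by lia.
clearbody L N k m.
have hkm : k * m <= N.
  rewrite -(leq_pmul2l r0) hb mulnC -mulnA [m * r]mulnC mulnA.
  by rewrite [m * L]mulnC; apply: leq_mul hd (leqnn m).
apply: (@real_part _ _ _ k) => //.
- apply: leq_trans hkm; rewrite leq_pmulr //.
- exact: hp.
Qed.
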